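(* Let $r\ge 1$ be an integer and let $\mathbf{C_r}$ be the poset with ground set $[r]^3$ in which $(x_1,y_1,z_1)\le (x_2,y_2,z_2)$ if and only if $z_1\le z_2$ and ($y_1<y_2$ or ($y_1=y_2$ and $x_1=x_2$)). Then every subposet $S$ of $\mathbf{C_r}$ with $|S|\ge 4r^2$ has dimension at least $3$.
   Context: $[r]$ denotes $\{0,1,\ldots,r-1\}$. A subposet of a poset $P$ is a subset of its ground set with the order induced from $P$. The dimension of a poset $P$ is the least integer $d$ such that there are $d$ linear extensions of $P$ whose intersection is $P$. *)

(* Defs.v *)
From mathcomp Require Import all_boot.
Set Implicit Arguments. Unset Strict Implicit. Unset Printing Implicit Defensive.

(* Ground set [r]^3 = 'I_r * 'I_r * 'I_r, a point is ((x, y), z). *)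
Definition pt (r : nat) : finType := ('I_r * 'I_r * 'I_r)%type.

Definition Cle (r : nat) (p q : pt r) : bool :=
  let: (x1, y1, z1) := p in
  let: (x2, y2, z2) := q in
  (z1 <= z2) && ((y1 < y2) || ((y1 == y2) && (x1 == x2))).

Definition linear_order_on (T : finType) (S : {set T}) (L : rel T) : Prop :=
  (forall x, x \in S -> L x x) /\
  (forall x y, x \in S -> y \in S -> L x y -> L y x -> x = y) /\
  (forall x y z, x \in S -> y \in S -> z \in S -> L x y -> L y z -> L x z) /\
  (forall x y, x \in S -> y \in S -> L x y || L y x).

Definition linear_extension (T : finType) (le : rel T) (S : {set T}) (L : rel T)
  : Prop :=
  linear_order_on S L /\ (forall x y, x \in S -> y \in S -> le x y -> L x y).

Definition realizer (T : finType) (le : rel T) (S : {set T}) (d : nat)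
  (Ls : 'I_d -> rel T) : Prop :=
  (forall i, linear_extension le S (Ls i)) /\
  (forall x y, x \in S -> y \in S -> (le x y <-> forall i, Ls i x y)).

Definition dim_ge (T : finType) (le : rel T) (S : {set T}) (k : nat) : Prop :=
  forall d (Ls : 'I_d -> rel T), d < k -> ~ realizer le S Ls.

(* Main.v *)
Require Import Defs.
From mathcomp Require Import all_boot zify.
Set Implicit Arguments. Unset Strict Implicit.


Definition good2 (T : finType) (le : rel T) (S : {set T}) (L1 L2 : rel T) : Prop :=
  [/\ linear_order_on S L1, linear_order_on S L2,
   (forall x y, x \in S -> y \in S -> le x y -> L1 x y /\ L2 x y),
   (forall x y, x \in S -> y \in S -> L1 x y -> L2 x y -> le x y) &
   (forall x, x \in S -> le x x)].

Lemma good2_flip (T : finType) (le : rel T) (S : {set T}) (L1 L2 : rel T) :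
  good2 le S L1 L2 ->
  good2 (fun x y => le y x) S (fun x y => L1 y x) (fun x y => L2 y x).
Proof.
case=> [[r1 [a1 [t1 o1]]] [r2 [a2 [t2 o2]]] ex re re'].
split=> //.
- split=> //; split; first by move=> x y xS yS h1 h2; apply: a1.
  split; last by move=> x y xS yS; rewrite orbC; apply: o1.
  by move=> x y z xS yS zS h1 h2; apply: (t1 z y x).
- split=> //; split; first by move=> x y xS yS h1 h2; apply: a2.
  split; last by move=> x y xS yS; rewrite orbC; apply: o2.
  by move=> x y z xS yS zS h1 h2; apply: (t2 z y x).
- by move=> x y xS yS h; apply: ex.
- by move=> x y xS yS h1 h2; apply: re.
Qed.

Lemma inc_swap (T : finType) (le : rel T) (S : {set T}) (L1 L2 : rel T) x y :
  good2 le S L1 L2 -> x \in S -> y \in S -> ~~ le x y -> L1 x y -> L2 y x.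
Proof.
case=> _ [_ [_ [_ o2]]] _ re _ xS yS nle h1.
case/orP: (o2 x y xS yS) => // h2.
by rewrite (re x y xS yS h1 h2) in nle.
Qed.

Lemma core (T : finType) (le : rel T) (S : {set T}) (L1 L2 : rel T) a1 a3 c b :
  good2 le S L1 L2 -> a1 \in S -> a3 \in S -> c \in S -> b \in S ->
  le a1 b -> le a3 b -> ~~ le c b -> ~~ le b c -> ~~ le a1 c -> ~~ le c a3 ->
  L1 a1 c -> L1 c a3 -> False.
Proof.
move=> G a1S a3S cS bS l1 l3 ncb nbc n1c nc3 h1 h3.
have G' := G; case: G' => [[r1 [an1 [t1 o1]]] [r2 [an2 [t2 o2]]] ex re rf].
case/orP: (o1 c b cS bS) => hcb.
- have Lbc := inc_swap G cS bS ncb hcb.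
  have Lca1 := inc_swap G a1S cS n1c h1.
  have [_ La1b] := ex _ _ a1S bS l1.
  have Lcb := t2 _ _ _ cS a1S bS Lca1 La1b.
  have e := an2 _ _ bS cS Lbc Lcb; subst c.
  by rewrite rf in ncb.
- have Lcb' : L2 a3 c := inc_swap G cS a3S nc3 h3.
  have [La3b _] := ex _ _ a3S bS l3.
  have Lcb := t1 _ _ _ cS a3S bS h3 La3b.
  have e := an1 _ _ bS cS hcb Lcb; subst c.
  by rewrite rf in ncb.
Qed.

Lemma chain_shift (T : finType) (le : rel T) (S : {set T}) (L1 L2 : rel T) ai ci aj :
  good2 le S L1 L2 -> ai \in S -> ci \in S -> aj \in S ->
  le ai ci -> ~~ le ci ai -> ~~ le ai aj -> ~~ le aj ci ->
  L1 ai aj -> L1 ci aj.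
Proof.
move=> G aiS ciS ajS lic nci nij nji h.
have G' := G; case: G' => [[r1 [an1 [t1 o1]]] [r2 [an2 [t2 o2]]] ex re rf].
case/orP: (o1 ci aj ciS ajS) => // h2.
have L2c := inc_swap G ajS ciS nji h2.
have L2a := inc_swap G aiS ajS nij h.
have L2ca := t2 _ _ _ ciS ajS aiS L2c L2a.
have [_ L2ac] := ex _ _ aiS ciS lic.
have e := an2 _ _ aiS ciS L2ac L2ca; subst ci.
by rewrite rf in nci.
Qed.

Lemma three_chains (T : finType) (le : rel T) (S : {set T}) (L1 L2 : rel T)
  (a c : nat -> T) b :
  good2 le S L1 L2 -> b \in S ->
  (forall i, i < 3 -> [/\ a i \in S, c i \in S, le (a i) b, le (a i) (c i) &
      [/\ ~~ le (c i) (a i), ~~ le (c i) b & ~~ le b (c i)]]) ->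
  (forall i j, i < 3 -> j < 3 -> i != j ->
      [/\ ~~ le (a i) (a j), ~~ le (a j) (c i) & ~~ le (c i) (a j)]) ->
  False.
Proof.
move=> G bS Hi Hij.
have G' := G; case: G' => [[r1 [an1 [t1 o1]]] [r2 [an2 [t2 o2]]] ex re rf].
have mid : forall i j k, i < 3 -> j < 3 -> k < 3 -> i != j -> j != k -> i != k ->
   L1 (a i) (a j) -> L1 (a j) (a k) -> False.
  move=> i j k ilt jlt klt ij jk ik h1 h2.
  have [aiS ciS aib aic [nca ncb nbc]] := Hi i ilt.
  have [ajS cjS ajb ajc [nca' ncb' nbc']] := Hi j jlt.
  have [akS ckS akb akc [nca'' ncb'' nbc'']] := Hi k klt.
  have ji : j != i by rewrite eq_sym.
  have [_ n1 _] := Hij j i jlt ilt ji.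
  have [n2 n3 n4] := Hij j k jlt klt jk.
  have [n5 _ _] := Hij i j ilt jlt ij.
  have [L1jc _] := ex _ _ ajS cjS ajc.
  have h1' := t1 _ _ _ aiS ajS cjS h1 L1jc.
  have h2' := chain_shift G ajS cjS akS ajc nca' n2 n3 h2.
  exact: (core G aiS akS cjS bS aib akb ncb' nbc' n1 n4 h1' h2').
have [a0S _ _ _ _] := Hi 0 isT.
have [a1S _ _ _ _] := Hi 1 isT.
have [a2S _ _ _ _] := Hi 2 isT.
case/orP: (o1 _ _ a0S a1S) => h01; case/orP: (o1 _ _ a1S a2S) => h12.
- exact: (mid 0 1 2).
- case/orP: (o1 _ _ a0S a2S) => h02; [exact: (mid 0 2 1) | exact: (mid 2 0 1)].
- case/orP: (o1 _ _ a0S a2S) => h02; [exact: (mid 1 0 2) | exact: (mid 1 2 0)].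
- exact: (mid 2 1 0).
Qed.


Definition px r (p : pt r) : 'I_r := p.1.1.
Definition py r (p : pt r) : 'I_r := p.1.2.
Definition pz r (p : pt r) : 'I_r := p.2.

Lemma CleE r (p q : pt r) : Cle p q =
  (pz p <= pz q) && ((py p < py q) || ((py p : nat) == py q) && ((px p : nat) == px q)).
Proof. by case: p => [[? ?] ?]; case: q => [[? ?] ?]. Qed.

Lemma F_up r (S : {set pt r}) L1 L2 (a c : nat -> pt r) b :
  good2 (@Cle r) S L1 L2 -> b \in S ->
  (forall i, i < 3 -> [/\ a i \in S, c i \in S, (pz (a i) : nat) = pz b, py (a i) < py b &
      [/\ (px (c i) : nat) = px (a i), (py (c i) : nat) = py (a i) & pz (a i) < pz (c i)]]) ->
  (forall i j, i < 3 -> j < 3 -> i != j ->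
      (py (a i) : nat) = py (a j) /\ (px (a i) : nat) <> px (a j)) -> False.
Proof.
move=> G bS Hi Hij; apply: (three_chains (a:=a) (c:=c) G bS).
- move=> i ilt; have [aS cS e1 e2 [e3 e4 e5]] := Hi i ilt.
  split=> //; rewrite ?CleE; try split; lia.
- move=> i j ilt jlt ij; have [e1 e2] := Hij i j ilt jlt ij.
  have [_ _ f1 f2 [f3 f4 f5]] := Hi i ilt.
  have [_ _ g1 g2 [g3 g4 g5]] := Hi j jlt.
  split=> /=; rewrite !CleE; lia.
Qed.

Lemma F_down r (S : {set pt r}) L1 L2 (a c : nat -> pt r) b :
  good2 (@Cle r) S L1 L2 -> b \in S ->
  (forall i, i < 3 -> [/\ a i \in S, c i \in S, (pz (a i) : nat) = pz b, py b < py (a i) &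
      [/\ (px (c i) : nat) = px (a i), (py (c i) : nat) = py (a i) & pz (c i) < pz (a i)]]) ->
  (forall i j, i < 3 -> j < 3 -> i != j ->
      (py (a i) : nat) = py (a j) /\ (px (a i) : nat) <> px (a j)) -> False.
Proof.
move=> G bS Hi Hij; apply: (three_chains (a:=a) (c:=c) (good2_flip G) bS).
- move=> i ilt; have [aS cS e1 e2 [e3 e4 e5]] := Hi i ilt.
  split=> //; rewrite ?CleE; try split; lia.
- move=> i j ilt jlt ij; have [e1 e2] := Hij i j ilt jlt ij.
  have [_ _ f1 f2 [f3 f4 f5]] := Hi i ilt.
  have [_ _ g1 g2 [g3 g4 g5]] := Hi j jlt.
  split=> /=; rewrite !CleE; lia.
Qed.


Lemma card_part (T U : finType) (A : {set T}) (f : T -> U) :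
  #|A| = \sum_(u : U) #|[set x in A | f x == u]|.
Proof.
rewrite -sum1_card (partition_big f predT) //=; apply: eq_bigr => u _.
rewrite -sum1_card; apply: eq_bigl => x; by rewrite !inE.
Qed.

Lemma card_gt2 (T : finType) (A : {set T}) : 2 < #|A| ->
  exists p1 p2 p3, [/\ p1 \in A, p2 \in A, p3 \in A & [/\ p1 != p2, p1 != p3 & p2 != p3]].
Proof.
move=> h.
have /card_gt0P [p1 p1A] : 0 < #|A| by lia.
have h1 : 1 < #|A :\ p1| by move: h; rewrite (cardsD1 p1) p1A; lia.
have /card_gt0P [p2 p2A] : 0 < #|A :\ p1| by lia.
have h2 : 0 < #|A :\ p1 :\ p2| by move: h1; rewrite (cardsD1 p2) p2A; lia.
have /card_gt0P [p3 p3A] := h2.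
move: p2A p3A; rewrite !inE => /andP [n12 p2A] /and3P [n23 n13 p3A].
exists p1, p2, p3; split=> //; split=> //; by rewrite eq_sym.
Qed.

Lemma pt_eq r (p q : pt r) : px p = px q -> py p = py q -> pz p = pz q -> p = q.
Proof. by case: p => [[? ?] ?]; case: q => [[? ?] ?]; rewrite /px /py /pz /= => -> -> ->. Qed.

Section Count.
Variables (r : nat) (S : {set pt r}).

Definition aboveYT (y t : 'I_r) := [exists q in S, (pz q == t) && (y < py q)].
Definition belowYT (y t : 'I_r) := [exists q in S, (pz q == t) && (py q < y)].
Definition top (p : pt r) :=
  [forall q in S, ((px q == px p) && (py q == py p)) ==> (pz q <= pz p)].
Definition bot (p : pt r) :=
  [forall q in S, ((px q == px p) && (py q == py p)) ==> (pz p <= pz q)].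
Definition Eset := [set p in S | if aboveYT (py p) (pz p) then top p
                                 else belowYT (py p) (pz p) && bot p].

Lemma ntop p : ~~ top p -> exists q, [/\ q \in S, px q = px p, py q = py p & pz p < pz q].
Proof.
move/forall_inP => h.
have [q qS] : exists2 q, q \in S & ~~ (((px q == px p) && (py q == py p)) ==> (pz q <= pz p)).
  apply/exists_inP; apply/negP => /exists_inP hh; apply: h => q qS.
  apply/negPn/negP => hq; apply: hh; by exists q.
rewrite negb_imply => /andP [/andP [/eqP e1 /eqP e2]]; rewrite -ltnNge => e3.
by exists q.
Qed.

Lemma nbot p : ~~ bot p -> exists q, [/\ q \in S, px q = px p, py q = py p & pz q < pz p].
Proof.
move/forall_inP => h.
have [q qS] : exists2 q, q \in S & ~~ (((px q == px p) && (py q == py p)) ==> (pz p <= pz q)).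
  apply/exists_inP; apply/negP => /exists_inP hh; apply: h => q qS.
  apply/negPn/negP => hq; apply: hh; by exists q.
rewrite negb_imply => /andP [/andP [/eqP e1 /eqP e2]]; rewrite -ltnNge => e3.
by exists q.
Qed.


Lemma T_le1 c : #|[set p in S | ((px p, py p) == c) && top p]| <= 1.
Proof.
apply/card_le1_eqP => p q; rewrite !inE => /and3P [pS /eqP pc tp] /and3P [qS /eqP qc tq].
have [ex ey] : px p = px q /\ py p = py q by rewrite -qc in pc; case: pc.
move/forall_inP/(_ q qS): tp; rewrite ex ey !eqxx /= => h1.
move/forall_inP/(_ p pS): tq; rewrite ex ey !eqxx /= => h2.
apply: pt_eq => //; apply: val_inj; apply/eqP; by rewrite eqn_leq h1 h2.
Qed.

Lemma B_le1 c : #|[set p in S | ((px p, py p) == c) && bot p]| <= 1.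
Proof.
apply/card_le1_eqP => p q; rewrite !inE => /and3P [pS /eqP pc tp] /and3P [qS /eqP qc tq].
have [ex ey] : px p = px q /\ py p = py q by rewrite -qc in pc; case: pc.
move/forall_inP/(_ q qS): tp; rewrite ex ey !eqxx /= => h1.
move/forall_inP/(_ p pS): tq; rewrite ex ey !eqxx /= => h2.
apply: pt_eq => //; apply: val_inj; apply/eqP; by rewrite eqn_leq h1 h2.
Qed.

Lemma Ec_le2 c : #|[set p in Eset | (px p, py p) == c]| <= 2.
Proof.
have sub : [set p in Eset | (px p, py p) == c] \subset
   [set p in S | ((px p, py p) == c) && top p] :|: [set p in S | ((px p, py p) == c) && bot p].
  apply/subsetP => p; rewrite !inE => /andP [/andP [pS]].
  case: ifP => _; [move=> tp pc | move=> /andP [_ bp] pc]; by rewrite pS pc ?tp ?bp ?orbT.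
apply: (leq_trans (subset_leq_card sub)); rewrite cardsU.
apply: (leq_trans (leq_subr _ _)); exact: leq_add (T_le1 c) (B_le1 c).
Qed.

Lemma Ec0_le1 (i0 : 'I_r) : (i0 : nat) = 0 -> #|[set p in Eset | (px p, py p) == (i0, i0)]| <= 1.
Proof.
move=> e0.
have sub : [set p in Eset | (px p, py p) == (i0, i0)] \subset
   [set p in S | ((px p, py p) == (i0, i0)) && top p].
  apply/subsetP => p; rewrite !inE => /andP [/andP [pS]].
  case: ifP => _; first by move=> tp pc; rewrite pS pc tp.
  move=> /andP [bl _] /eqP [_ ey]; exfalso.
  move: bl => /exists_inP [q _ /andP [_]]; by rewrite ey e0.
exact: (leq_trans (subset_leq_card sub) (T_le1 _)).
Qed.

Lemma E_bound (i0 : 'I_r) : (i0 : nat) = 0 -> #|Eset| + 1 <= 2 * (r * r).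
Proof.
move=> e0; rewrite (card_part Eset (fun p => (px p, py p))).
have -> : 2 * (r * r) = \sum_(c : 'I_r * 'I_r) 2.
  by rewrite sum_nat_const card_prod card_ord mulnC.
rewrite (bigD1 (i0, i0)) //= [X in _ <= X](bigD1 (i0, i0)) //=.
have h1 := Ec0_le1 e0.
have h2 : \sum_(c | c != (i0, i0)) #|[set x in Eset | (px x, py x) == c]|
   <= \sum_(c | c != (i0, i0)) 2 by apply: leq_sum => c _; exact: Ec_le2.
rewrite addnAC; apply: leq_add h2; by rewrite addn1.
Qed.


Lemma dist_px (p q : pt r) : py p = py q -> pz p = pz q -> p != q -> (px p : nat) <> px q.
Proof. move=> e1 e2 /eqP n e; apply: n; apply: pt_eq => //; exact: val_inj. Qed.

Lemma three_bad L1 L2 (y t : 'I_r) p1 p2 p3 :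
  good2 (@Cle r) S L1 L2 ->
  p1 \in S :\: Eset -> p2 \in S :\: Eset -> p3 \in S :\: Eset ->
  py p1 = y -> py p2 = y -> py p3 = y -> pz p1 = t -> pz p2 = t -> pz p3 = t ->
  p1 != p2 -> p1 != p3 -> p2 != p3 -> aboveYT y t || belowYT y t -> False.
Proof.
move=> G h1 h2 h3 y1 y2 y3 t1 t2 t3 d12 d13 d23 ab.
move: h1 h2 h3; rewrite !inE /Eset ?inE y1 y2 y3 t1 t2 t3.
move=> /andP [n1 p1S] /andP [n2 p2S] /andP [n3 p3S].
move: n1 n2 n3; rewrite p1S p2S p3S /=.
pose a := fun i : nat => if i == 0 then p1 else if i == 1 then p2 else p3.
have Hij : forall i j, i < 3 -> j < 3 -> i != j ->
      (py (a i) : nat) = py (a j) /\ (px (a i) : nat) <> px (a j).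
  move=> i j; case: i => [|[|[|//]]] _; case: j => [|[|[|//]]] _ //= _;
    rewrite /a /=; (split; [congruence|]); apply: dist_px; try congruence;
    by rewrite // eq_sym.
case abt: (aboveYT y t) ab => /= ab.
- move=> n1 n2 n3.
  case/ntop: n1 => c1 [c1S ex1 ey1 ez1].
  case/ntop: n2 => c2 [c2S ex2 ey2 ez2].
  case/ntop: n3 => c3 [c3S ex3 ey3 ez3].
  case/exists_inP: abt => b bS /andP [/eqP bt yb].
  pose c := fun i : nat => if i == 0 then c1 else if i == 1 then c2 else c3.
  apply: (F_up (a:=a) (c:=c) G bS) Hij => i.
  case: i => [|[|[|//]]] _; rewrite /a /c /=.
  + split=> //; [by rewrite t1 bt | by rewrite y1 | by split; rewrite ?ex1 ?ey1].
  + split=> //; [by rewrite t2 bt | by rewrite y2 | by split; rewrite ?ex2 ?ey2].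
  + split=> //; [by rewrite t3 bt | by rewrite y3 | by split; rewrite ?ex3 ?ey3].
- rewrite ab /= => n1 n2 n3.
  case/nbot: n1 => c1 [c1S ex1 ey1 ez1].
  case/nbot: n2 => c2 [c2S ex2 ey2 ez2].
  case/nbot: n3 => c3 [c3S ex3 ey3 ez3].
  case/exists_inP: ab => b bS /andP [/eqP bt yb].
  pose c := fun i : nat => if i == 0 then c1 else if i == 1 then c2 else c3.
  apply: (F_down (a:=a) (c:=c) G bS) Hij => i.
  case: i => [|[|[|//]]] _; rewrite /a /c /=.
  + split=> //; [by rewrite t1 bt | by rewrite y1 | by split; rewrite ?ex1 ?ey1].
  + split=> //; [by rewrite t2 bt | by rewrite y2 | by split; rewrite ?ex2 ?ey2].
  + split=> //; [by rewrite t3 bt | by rewrite y3 | by split; rewrite ?ex3 ?ey3].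
Qed.


Lemma At_le L1 L2 (t : 'I_r) : good2 (@Cle r) S L1 L2 ->
  #|[set p in S :\: Eset | pz p == t]| <= 2 * r.
Proof.
move=> G; set A := [set p in S :\: Eset | pz p == t].
case: (boolP [exists p in A, ~~ aboveYT (py p) t && ~~ belowYT (py p) t])
  => [/exists_inP [p0 p0A /andP [na nb]] | hno].
- have sub : A \subset [set ((x, py p0), t) | x : 'I_r].
    apply/subsetP => p; rewrite !inE => /andP [/andP [_ pS] /eqP pt].
    have ey : py p = py p0.
      case: (ltngtP (py p0) (py p)) => h.
      + by exfalso; move/negP: na; apply; apply/exists_inP; exists p => //; rewrite pt eqxx h.
      + by exfalso; move/negP: nb; apply; apply/exists_inP; exists p => //; rewrite pt eqxx h.
      + exact: val_inj.
    apply/imsetP; exists (px p) => //; apply: pt_eq => //.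
  apply: (leq_trans (subset_leq_card sub)); apply: (leq_trans (leq_imset_card _ _)).
  rewrite card_ord; lia.
- have hab : forall p, p \in A -> aboveYT (py p) t || belowYT (py p) t.
    move=> p pA; apply/negPn/negP; rewrite negb_or => hp.
    by move/negP: hno; apply; apply/exists_inP; exists p.
  rewrite (card_part A (fun p => py p)).
  have -> : 2 * r = \sum_(y : 'I_r) 2 by rewrite sum_nat_const card_ord mulnC.
  apply: leq_sum => y _.
  rewrite leqNgt; apply/negP => /card_gt2 [p1 [p2 [p3 [h1 h2 h3 [d12 d13 d23]]]]].
  have hp1 : p1 \in A by move: h1; rewrite inE => /andP [].
  have ab := hab p1 hp1.
  move: h1; rewrite inE => /andP [h1 /eqP y1].
  move: h2; rewrite inE => /andP [h2 /eqP y2].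
  move: h3; rewrite inE => /andP [h3 /eqP y3].
  move: h1; rewrite inE => /andP [m1 /eqP t1].
  move: h2; rewrite inE => /andP [m2 /eqP t2].
  move: h3; rewrite inE => /andP [m3 /eqP t3].
  rewrite y1 in ab.
  exact: (three_bad G m1 m2 m3 y1 y2 y3 t1 t2 t3 d12 d13 d23 ab).
Qed.

Lemma LD_bound L1 L2 : good2 (@Cle r) S L1 L2 -> #|S :\: Eset| <= 2 * (r * r).
Proof.
move=> G; rewrite (card_part (S :\: Eset) (fun p => pz p)).
have -> : 2 * (r * r) = \sum_(t : 'I_r) (2 * r) by rewrite sum_nat_const card_ord; lia.
apply: leq_sum => t _; exact: (At_le t G).
Qed.

Lemma total_bound L1 L2 : 1 <= r -> good2 (@Cle r) S L1 L2 -> #|S| < 4 * r ^ 2.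
Proof.
move=> hr G.
have hE := @E_bound (Ordinal hr) erefl.
have hL := LD_bound G.
have hsub : Eset \subset S by apply/subsetP => p; rewrite inE => /andP [].
have := cardsID Eset S; rewrite (setIidPr hsub) => e.
rewrite -e; lia.
Qed.

End Count.


Lemma Cle_refl r (p : pt r) : Cle p p.
Proof. rewrite CleE; lia. Qed.

Lemma Cle_anti r (p q : pt r) : Cle p q -> Cle q p -> p = q.
Proof.
rewrite !CleE => h1 h2; apply: pt_eq; apply: val_inj => /=; lia.
Qed.

Lemma real_good2 r (S : {set pt r}) d (Ls : 'I_d -> rel (pt r)) : d < 3 ->
  realizer (@Cle r) S Ls -> exists L1 L2, good2 (@Cle r) S L1 L2.
Proof.
move=> hd [hext hre].
case: d Ls hd hext hre => [|d] Ls hd hext hre.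
- exists (@Cle r), (@Cle r).
  have tot : forall x y, x \in S -> y \in S -> Cle x y.
    by move=> x y xS yS; apply/(hre x y xS yS) => [[]].
  have lo : linear_order_on S (@Cle r).
    split; first by move=> x _; exact: Cle_refl.
    split; first by move=> x y _ _; exact: Cle_anti.
    split; first by move=> x y z xS _ zS _ _; exact: tot.
    by move=> x y xS yS; rewrite tot.
  split=> //; first [by move=> x _; exact: Cle_refl | by move=> x y _ _ h | by move=> x y _ _ h _].
- have h0 : 0 < d.+1 by [].
  have hm : d < d.+1 by [].
  exists (Ls (Ordinal h0)), (Ls (Ordinal hm)).
  have [lo1 ex1] := hext (Ordinal h0).
  have [lo2 ex2] := hext (Ordinal hm).
  split=> //.
  - by move=> x y xS yS h; split; [exact: ex1 | exact: ex2].
  - move=> x y xS yS h1 h2; apply/(hre x y xS yS) => i.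
    have [e|e] : i = Ordinal h0 \/ i = Ordinal hm.
      case: i => m hmi.
      have : m = 0 \/ m = d by lia.
      by case=> e; [left | right]; apply: val_inj.
    + by rewrite e.
    + by rewrite e.
  - by move=> x _; exact: Cle_refl.
Qed.

Theorem mainTheorem2 (r : nat) (hr : 1 <= r) (S : {set pt r}) :
  4 * r ^ 2 <= #|S| -> dim_ge (@Cle r) S 3.
Proof.
move=> hS d Ls hd hR.
have [L1 [L2 G]] := real_good2 hd hR.
have := total_bound hr G; lia.
Qed.
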